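(* Let $G$ be a finite abelian group and let $\sigma_1,\sigma_2,\tau\in G$ be non-trivial elements with $o(\tau)>2$ and $\tau\in\langle\sigma_1,\sigma_2\rangle$. Then: (1) if $\mathrm{rank}\langle\sigma_1,\sigma_2\rangle=2$, there exist characters $\phi_1,\phi_2,\chi\in G^*$ such that (i) $\chi(\tau)\neq1$; (ii) $\phi_1(\sigma_1)\neq1$, $\phi_2(\sigma_2)\neq1$ and $\phi_1(\sigma_2)=\phi_2(\sigma_1)=1$; (iii) $\phi_1(\sigma_1)\chi(\sigma_1)\neq1$ and $\phi_2(\sigma_2)\overline{\chi}(\sigma_2)\neq1$. (2) If $\mathrm{rank}\langle\sigma_1,\sigma_2\rangle=1$, there exist characters $\phi,\chi\in G^*$ such that (i) $\chi(\tau)\neq1$; (ii) $\phi(\sigma_i)\neq1$ for $i=1,2$; (iii) $\phi(\sigma_i)\chi(\sigma_i)\neq1$ for $i=1,2$.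
   Context: $G^*$ is the group of characters $G\to\mathbb{C}^*$; $o(g)$ is the order of $g$; the rank of an abelian group is the minimal number of its generators. *)

(* Defs.v *)
From mathcomp Require Import all_boot all_order all_algebra all_fingroup all_solvable all_field all_character.
Set Implicit Arguments. Unset Strict Implicit. Unset Printing Implicit Defensive.

Definition gen_rank_is (gT : finGroupType) (H : {set gT}) (n : nat) : Prop :=
  (exists s : seq gT, size s = n /\ <<[set x in s]>>%g = H) /\
  (forall s : seq gT, <<[set x in s]>>%g = H -> (n <= size s)%N).

(* Main.v *)
Require Import Defs.
From mathcomp Require Import all_boot all_order all_algebra all_fingroup all_solvable all_field all_character.
Import GRing.Theory Num.Theory.
Local Open Scope ring_scope.
Set Implicit Arguments. Unset Strict Implicit. Unset Printing Implicit Defensive.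

Lemma lin_ker (gT : finGroupType) (G : {group gT}) (xi : 'CF(G)) :
  xi \is a linear_char -> cfker xi = [set x in G | xi x == 1].
Proof. by move=> lin; rewrite cfkerEchar ?lin_charW // lin_char1. Qed.

Section Aux.
Variable gT : finGroupType.


Lemma sep_char (G K : {group gT}) x :
  abelian G -> K \subset G -> x \in G -> x \notin K ->
  exists xi : 'CF(G), [/\ xi \is a linear_char, xi x != 1 &
                         forall y, y \in K -> xi y = 1].
Proof.
move=> abG sKG Gx Kx.
have nKG : (K <| G)%g by rewrite -sub_abelian_normal.
have abQ : abelian (G / K)%g by apply: quotient_abelian.
have X1 : coset K x \notin [1 (coset_of K)]%g.
  rewrite inE; apply: contra Kx => /eqP h; apply: coset_idr => //.
  by apply: (subsetP (normal_norm nKG)).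
have [i Hi] : exists i, coset K x \notin cfker 'chi[(G / K)%g]_i.
  case: (pickP (fun i => coset K x \notin cfker 'chi[(G / K)%g]_i)) => [i Hi|none].
    by exists i.
  case/negP: X1; rewrite -(TI_cfker_irr (G / K)%g); apply/bigcapP => i _.
  by move: (none i) => /negbFE.
have lini : 'chi[(G / K)%g]_i \is a linear_char by apply/char_abelianP.
exists ('chi_i %% K)%CF; split; first exact: cfMod_lin_char.
  by rewrite cfModE //; move: Hi; rewrite (lin_ker lini) inE mem_quotient.
move=> y Ky; rewrite cfModE ?(subsetP sKG) // coset_id // lin_char1 //.
Qed.

Lemma ext_char (G H : {group gT}) (lam : 'CF(H)) :
  abelian G -> H \subset G -> lam \is a linear_char ->
  exists xi : 'CF(G), xi \is a linear_char /\ forall x, x \in H -> xi x = lam x.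
Proof.
move=> abG sHG lin.
have ch := lin_charW lin.
have nz : 'Ind[G] lam != 0.
  rewrite cfInd_eq0 //; apply/eqP => lam0; move: (lin_char1 lin).
  by rewrite lam0 cfunE => /eqP; rewrite eq_sym oner_eq0.
have [i Hi] := neq0_has_constt nz.
have lini : 'chi[G]_i \is a linear_char by apply/char_abelianP.
exists 'chi_i; split=> // x Hx.
have linR : 'Res[H] 'chi_i \is a linear_char by apply: cfRes_lin_char.
have /irrP[j Dj] := lin_char_irr lin.
have /irrP[k Dk] := lin_char_irr linR.
move: Hi; rewrite inE -Frobenius_reciprocity Dk Dj cfdot_irr.
have [jk _|njk] := eqVneq j k; last by rewrite eqxx.
by rewrite -(cfResE _ sHG Hx) Dk jk.
Qed.

Lemma faithful_cyclic (H : {group gT}) :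
  cyclic H -> exists lam : 'CF(H),
    lam \is a linear_char /\ forall x, x \in H -> lam x = 1 -> x = 1%g.
Proof.
move=> cycH; have abH := cyclic_abelian cycH.
have [g defH] := cyclicP cycH.
have Hg : g \in H by rewrite defH cycle_id.
have [L [cF [cFinj cardL cFlin cFonto] [cF1 cFM cFX cFV cFo]]] := lin_char_group H.
have abL : abelian [set: L].
  by apply/centsP => u _ v _; apply: cFinj; rewrite /commute !cFM mulrC.
have [u _ eL] := exponent_witness (abelian_nil abL).
set e := exponent [set: L] in eL.
have ge : (g ^+ e)%g = 1%g.
  apply/set1gP; rewrite -(TI_cfker_irr H); apply/bigcapP => i _.
  have [v Dv] := cFonto _ (char_abelianP _ abH i).
  rewrite Dv (lin_ker (cFlin v)) inE groupX //= lin_charX //.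
  have : (#[cF v]%CF %| e)%N by rewrite cFo order_dvdn expg_exponent ?inE.
  by move/dvdn_cforderP => /(_ g Hg) ->.
have dHe : (#|H| %| e)%N by rewrite defH -orderE order_dvdn ge.
set xi := cF u.
have nK : (cfker xi <| H)%g by apply: cfker_normal.
have eE : e = exponent (H / cfker xi)%g by rewrite eL -cFo cforder_lin_char.
have d2 : (#|H| %| #|H : cfker xi|%g)%N.
  rewrite -card_quotient ?normal_norm //; apply: dvdn_trans dHe _.
  by rewrite eE exponent_dvdn.
have K1 : #|cfker xi| = 1%N.
  have := Lagrange (cfker_sub xi); move: d2.
  have := indexg_gt0 H (cfker xi).
  set a := #|H : cfker xi|%g; set b := #|cfker xi|.
  move=> a0 /dvdn_leq-/(_ a0) le1 Eh.
  have b0 : (0 < b)%N by rewrite /b cardG_gt0.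
  rewrite -Eh in le1; apply/eqP; rewrite eqn_leq b0 andbT.
  by rewrite -(leq_pmul2r a0) mul1n.
exists xi; split=> [|x Hx x1]; first exact: cFlin.
have : x \in cfker xi by rewrite (lin_ker (cFlin u)) inE Hx x1 eqxx.
by move/card1_trivg: K1 => ->; move/set1gP.
Qed.

Lemma z57 (z : gT) : z != 1%g -> (z ^+ 2 == 1)%g || (z ^+ 3 == 1)%g ->
  (z ^+ 5 != 1)%g /\ (z ^+ 7 != 1)%g.
Proof.
move=> nz /orP[] /eqP h.
  rewrite (_ : 5 = 1 + 2 + 2)%N // (_ : 7 = 1 + 2 + 2 + 2)%N //.
  by rewrite !expgD h !mulg1 expg1.
have z2 : (z ^+ 2 != 1)%g.
  apply: contra nz => /eqP h2; apply/eqP.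
  by rewrite -h (_ : 3 = 1 + 2)%N // expgD h2 mulg1 expg1.
rewrite (_ : 5 = 2 + 3)%N // (_ : 7 = 1 + 3 + 3)%N //.
by rewrite !expgD h !mulg1 expg1.
Qed.

Lemma exists_k (x y t : gT) : x != 1%g -> y != 1%g -> (t ^+ 2 != 1)%g ->
  exists k, [/\ (t ^+ k != 1)%g, (x ^+ k.+1 != 1)%g & (y ^+ k.+1 != 1)%g].
Proof.
move=> nx ny nt.
have [/andP[x2 y2]|] := boolP ((x ^+ 2 != 1)%g && (y ^+ 2 != 1)%g).
  exists 1%N; rewrite expg1; split=> //.
  by apply: contra nt => /eqP ->; rewrite expg1n.
move=> h2.
have [/andP[x3 y3]|] := boolP ((x ^+ 3 != 1)%g && (y ^+ 3 != 1)%g).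
  by exists 2%N; split.
move=> h3.
have no23 (z : gT) : z != 1%g -> ~~ ((z ^+ 2 == 1)%g && (z ^+ 3 == 1)%g).
  move=> nz; apply/negP => /andP[/eqP a /eqP b]; case/eqP: nz.
  by rewrite -b (_ : 3 = 1 + 2)%N // expgD a mulg1 expg1.
have hx : (x ^+ 2 == 1)%g || (x ^+ 3 == 1)%g.
  move: h2 h3 (no23 _ nx) (no23 _ ny).
  by case: (x ^+ 2 == 1)%g; case: (x ^+ 3 == 1)%g; case: (y ^+ 2 == 1)%g; case: (y ^+ 3 == 1)%g.
have hy : (y ^+ 2 == 1)%g || (y ^+ 3 == 1)%g.
  move: h2 h3 (no23 _ nx) (no23 _ ny).
  by case: (x ^+ 2 == 1)%g; case: (x ^+ 3 == 1)%g; case: (y ^+ 2 == 1)%g; case: (y ^+ 3 == 1)%g.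
have [x5 x7] := z57 nx hx; have [y5 y7] := z57 ny hy.
have [t4|t4] := boolP (t ^+ 4 != 1)%g; first by exists 4%N; split.
exists 6%N; split=> //; apply: contra nt => /eqP t6; apply/eqP.
move/negbNE/eqP: t4 => t4.
by rewrite -t6 (_ : 6 = 4 + 2)%N // expgD t4 mul1g.
Qed.

Lemma sq_on_H (G : {group gT}) (psi : 'CF(G)) a b t :
  psi \is a linear_char -> a \in G -> b \in G -> t \in <<[set a; b]>>%g ->
  psi a ^+ 2 = 1 -> psi b ^+ 2 = 1 -> psi t ^+ 2 = 1.
Proof.
move=> lin Ga Gb Ht ha hb.
have lin2 : psi ^+ 2 \is a linear_char by rewrite rpredX.
have sub : <<[set a; b]>>%g \subset cfker (psi ^+ 2).
  rewrite gen_subG subUset !sub1set /= !(lin_ker lin2) !inE Ga Gb.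
  by rewrite !exp_cfunE // ha hb eqxx.
have := subsetP sub t Ht; rewrite (lin_ker lin2) inE => /andP[Gt].
by rewrite exp_cfunE // => /eqP.
Qed.
End Aux.

Lemma one_neq_m1 : (1 : algC) != -1.
Proof. by rewrite -subr_eq0 opprK -mulr2n pnatr_eq0. Qed.

Lemma not_in_cycle (gT : finGroupType) (a b : gT) :
  (forall s : seq gT, <<[set x in s]>>%g = <<[set a; b]>>%g -> (2 <= size s)%N) ->
  a \notin <[b]>%g.
Proof.
move=> hmin; apply/negP => ab.
suff E : <<[set x in [:: b]]>>%g = <<[set a; b]>>%g by move: (hmin _ E).
have -> : [set x in [:: b]] = [set b] by apply/setP => z; rewrite !inE.
change (<[b]>%g = <<[set a; b]>>%g); apply/eqP; rewrite eqEsubset.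
rewrite cycle_subG mem_gen ?inE ?eqxx ?orbT //=.
by rewrite gen_subG subUset !sub1set ab cycle_id.
Qed.

Theorem lemma4p13 (gT : finGroupType) (G : {group gT}) (s1 s2 tau : gT) :
  abelian G -> s1 \in G -> s2 \in G -> tau \in G ->
  s1 != 1%g -> s2 != 1%g -> tau != 1%g ->
  (2 < #[tau]%g)%N ->
  tau \in <<[set s1; s2]>>%g ->
  (gen_rank_is <<[set s1; s2]>>%g 2 ->
     exists (phi1 phi2 chi : 'CF(G)),
       [/\ [/\ phi1 \is a linear_char, phi2 \is a linear_char & chi \is a linear_char],
           chi tau != 1,
           [/\ phi1 s1 != 1, phi2 s2 != 1, phi1 s2 = 1 & phi2 s1 = 1] &
           phi1 s1 * chi s1 != 1 /\ phi2 s2 * (chi s2)^* != 1]) /\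
  (gen_rank_is <<[set s1; s2]>>%g 1 ->
     exists (phi chi : 'CF(G)),
       [/\ phi \is a linear_char, chi \is a linear_char,
           chi tau != 1,
           phi s1 != 1 /\ phi s2 != 1 &
           phi s1 * chi s1 != 1 /\ phi s2 * chi s2 != 1]).
Proof.
move=> abG Gs1 Gs2 Gt n1 n2 nt ot Ht.
have sHG : <<[set s1; s2]>>%g \subset G by rewrite gen_subG subUset !sub1set Gs1 Gs2.
have Hs1 : s1 \in <<[set s1; s2]>>%g by rewrite mem_gen // !inE eqxx.
have Hs2 : s2 \in <<[set s1; s2]>>%g by rewrite mem_gen // !inE eqxx orbT.
have t2 : (tau ^+ 2 != 1)%g.
  apply: contraTneq ot => h; rewrite -leqNgt; apply: dvdn_leq => //.
  by rewrite order_dvdn h.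
have [chi0 [lin0 c0 _]] : exists xi : 'CF(G), [/\ xi \is a linear_char, xi (tau ^+ 2)%g != 1 &
                         forall y, y \in 1%G -> xi y = 1].
  apply: sep_char => //; [exact: sub1G | exact: groupX |].
  by apply: contra t2 => /set1gP ->.
have c0' : chi0 tau ^+ 2 != 1 by rewrite -lin_charX.
split.
- case=> _ hmin.
  have ns1 : s1 \notin <[s2]>%g by apply: not_in_cycle.
  have ns2 : s2 \notin <[s1]>%g by apply: not_in_cycle => s; rewrite setUC; apply: hmin.
  have c2G : <[s2]>%G \subset G by rewrite cycle_subG.
  have c1G : <[s1]>%G \subset G by rewrite cycle_subG.
  have [phi1 [l1 p1 k1]] := sep_char abG c2G Gs1 ns1.
  have [phi2 [l2 p2 k2]] := sep_char abG c1G Gs2 ns2.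
  have p1s2 : phi1 s2 = 1 by apply: k1; apply: cycle_id.
  have p2s1 : phi2 s1 = 1 by apply: k2; apply: cycle_id.
  set a1 := phi1 s1 in p1 *. set a2 := phi2 s2 in p2 *.
  pose chi1 := if (a1 == -1) && (chi0 s1 == -1) then chi0 * phi1 else chi0.
  pose chi := if (a2 == -1) && (chi1 s2 == -1) then chi1 * phi2 else chi1.
  have lc1 : chi1 \is a linear_char by rewrite /chi1; case: ifP => _; rewrite ?rpredM.
  have lc : chi \is a linear_char by rewrite /chi; case: ifP => _; rewrite ?rpredM.
  have e1 : chi1 tau ^+ 2 = chi0 tau ^+ 2.
    rewrite /chi1; case: ifP => // /andP[/eqP h1 _].
    rewrite cfunE exprMn (sq_on_H l1 Gs1 Gs2 Ht) ?mulr1 //.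
      by rewrite -/a1 h1 sqrrN expr1n.
    by rewrite p1s2 expr1n.
  have e2 : chi tau ^+ 2 = chi1 tau ^+ 2.
    rewrite /chi; case: ifP => // /andP[/eqP h2 _].
    rewrite cfunE exprMn (sq_on_H l2 Gs1 Gs2 Ht) ?mulr1 //.
      by rewrite p2s1 expr1n.
    by rewrite -/a2 h2 sqrrN expr1n.
  have ct : chi tau != 1 by apply: contra c0' => /eqP h; rewrite -e1 -e2 h expr1n.
  have C1 : a1 = -1 -> chi s1 != -1.
    move=> h1; have -> : chi s1 = chi1 s1.
      by rewrite /chi; case: ifP => // _; rewrite cfunE p2s1 mulr1.
    rewrite /chi1 h1 eqxx /=; case: (chi0 s1 =P -1) => [h|h] /=; last exact/eqP.
    by rewrite cfunE h -/a1 h1 mulrNN mulr1 one_neq_m1.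
  have C2 : a2 = -1 -> chi s2 != -1.
    move=> h2; rewrite /chi h2 eqxx /=; case: (chi1 s2 =P -1) => [h|h] /=; last exact/eqP.
    by rewrite cfunE h -/a2 h2 mulrNN mulr1 one_neq_m1.
  pose phi1' := if a1 * chi s1 == 1 then phi1 ^+ 2 else phi1.
  pose phi2' := if a2 * (chi s2)^* == 1 then phi2 ^+ 2 else phi2.
  exists phi1', phi2', chi; split.
  + by split=> //; [rewrite /phi1' | rewrite /phi2']; case: ifP => _; rewrite ?rpredX.
  + exact: ct.
  + split.
    * rewrite /phi1'; case: ifP => [/eqP h|_]; last exact: p1.
      rewrite exp_cfunE // -/a1 sqrf_eq1 negb_or p1 /=; apply/eqP => ha.
      move/eqP: (C1 ha); apply; rewrite ha mulN1r in h.
      by rewrite -h opprK.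
    * rewrite /phi2'; case: ifP => [/eqP h|_]; last exact: p2.
      rewrite exp_cfunE // -/a2 sqrf_eq1 negb_or p2 /=; apply/eqP => ha.
      move/eqP: (C2 ha); apply; rewrite ha mulN1r in h.
      have hc : (chi s2)^* = -1 by rewrite -h opprK.
      by rewrite -(conjCK (chi s2)) hc rmorphN1.
    * by rewrite /phi1'; case: ifP => _; rewrite ?exp_cfunE // p1s2 ?expr1n.
    * by rewrite /phi2'; case: ifP => _; rewrite ?exp_cfunE // p2s1 ?expr1n.
  + split.
    * rewrite /phi1'; case: ifP => [/eqP h|/negbT //].
      by rewrite exp_cfunE // -/a1 expr2 -mulrA h mulr1.
    * rewrite /phi2'; case: ifP => [/eqP h|/negbT //].
      by rewrite exp_cfunE // -/a2 expr2 -mulrA h mulr1.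
- case=> [[s [sz hs]] _].
  case: s sz hs => [|g [|]] //= _ hs.
  have cycH : cyclic <<[set s1; s2]>>%G.
    apply/cyclicP; exists g; rewrite /= -hs /cycle; congr <<_>>%g.
    by apply/setP => z; rewrite !inE.
  have [lam [llam flam]] := faithful_cyclic cycH.
  have [phi [lphi ephi]] := ext_char abG sHG llam.
  have fphi x : x \in <<[set s1; s2]>>%g -> x != 1%g -> phi x != 1.
    move=> Hx nx; rewrite ephi //; apply: contra nx => /eqP /(flam _ Hx) ->.
    by [].
  have [k [tk s1k s2k]] := exists_k n1 n2 t2.
  exists phi, (phi ^+ k); split.
  + exact: lphi.
  + by rewrite rpredX.
  + by rewrite exp_cfunE // -lin_charX //; apply: fphi => //; apply: groupX.
  + by split; apply: fphi.
  + split; rewrite exp_cfunE // -exprS -lin_charX //; apply: fphi => //;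
      apply: groupX.
    * exact: Hs1.
    * exact: Hs2.
Qed.
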